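(* Let $p$ be a prime, $q=p^e$, and let $T:\mathbb{F}_q\to U$ be the Teichmüller lift. Let $M_0=(T(a)^r)_{r\in[0,q-1],\,a\in\mathbb{F}_q}$ be the $q\times q$ matrix over $\mathbb{Z}_p[\xi_{q-1}]$ whose rows are indexed by $r\in\{0,1,\dots,q-1\}$ and columns by $a\in\mathbb{F}_q$ (with the convention $T(0)^0=1$, so the row $r=0$ consists of all ones), and let $\boldsymbol{M}=M_0^{\otimes k}$ be its $k$-th Kronecker (tensor) power, a $q^k\times q^k$ matrix. Then for every vector $x\in\mathbb{Q}_p(\xi_{p(q-1)})^{q^k}$, setting $y=\boldsymbol{M}x$, we have $\nu_p(y)=\nu_p(x)$.
   Context: $\xi_m$ denotes a primitive $m$-th root of unity in $\mathbb{C}_p$ (the completion of an algebraic closure of $\mathbb{Q}_p$). The ring $\mathbb{Z}_p[\xi_{q-1}]$ has maximal ideal $(p)$ and residue field identified with $\mathbb{F}_q$; $U$ is the set of roots of $X^q-X$ in $\mathbb{Z}_p[\xi_{q-1}]$ (the $(q-1)$-st roots of unity together with $0$), and the Teichmüller lift $T:\mathbb{F}_q\to U$ is the inverse of the reduction bijection $U\to\mathbb{F}_q$ (so $T(0)=0$). $\nu_p$ is the $p$-adic valuation on $\mathbb{Q}_p$ extended to $\mathbb{Q}_p(\xi_{p(q-1)})$ (values in $\frac{1}{p-1}\mathbb{Z}\cup\{\infty\}$, $\nu_p(0)=\infty$). For a vector $x=(x_1,\dots,x_n)$, $\nu_p(x)=\min_i\nu_p(x_i)$. *)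

(* Defs.v *)
From HB Require Import structures.
From mathcomp Require Import all_boot all_order all_algebra all_field.
From mathcomp Require Import constructive_ereal.
From mathcomp Require Export mxtens.

Set Implicit Arguments.
Unset Strict Implicit.
Unset Printing Implicit Defensive.

Import Order.TTheory GRing.Theory Num.Theory.
Local Open Scope ereal_scope.
Local Open Scope ring_scope.

Definition is_valuation (K : fieldType) (nu : K -> \bar rat) : Prop :=
  [/\ forall x : K, (nu x == +oo)%E = (x == 0),
      forall x : K, (nu x != -oo)%E,
      forall x y : K, nu (x * y) = (nu x + nu y)%E
    & forall x y : K, (Order.min (nu x) (nu y) <= nu (x + y)%R)%E].

(* nu extends the p-adic valuation nu_p of Q: normalised by nu p = 1. *)
Definition extends_nu_p (K : fieldType) (p : nat) (nu : K -> \bar rat) : Prop :=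
  nu p%:R = 1%:E.

(* red : K -> F restricted to the valuation ring {x | nu x >= 0} is a
   surjective ring morphism onto F whose kernel is the maximal ideal
   {x | nu x > 0}: i.e. F is identified with the residue field. *)
Definition is_reduction (K : fieldType) (F : finFieldType)
    (nu : K -> \bar rat) (red : K -> F) : Prop :=
  [/\ forall x y : K, (0 <= nu x)%E -> (0 <= nu y)%E -> red (x + y) = red x + red y,
      forall x y : K, (0 <= nu x)%E -> (0 <= nu y)%E -> red (x * y) = red x * red y,
      red 1 = 1,
      forall x : K, (0 <= nu x)%E -> (red x == 0) = (0 < nu x)%E
    & forall a : F, exists2 x : K, (0 <= nu x)%E & red x = a].

(* T is the Teichmüller lift F_q -> U: T a is an element of
   U = {roots of X^q - X} (q = #|F|) lying in the valuation ring and reducing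
   to a (this determines T uniquely; in particular T 0 = 0). *)
Definition is_teichmuller (K : fieldType) (F : finFieldType)
    (nu : K -> \bar rat) (red : K -> F) (T : F -> K) : Prop :=
  forall a : F, [/\ T a ^+ #|F| = T a, (0 <= nu (T a))%E & red (T a) = a].

(* The q x q matrix M_0 = (T(a)^r)_{r in [0,q-1], a in F_q}; row r : 'I_q,
   the columns are indexed by F via its canonical enumeration enum_val.
   The convention T(0)^0 = 1 holds since x ^+ 0 = 1. *)
Definition M0 (K : fieldType) (F : finFieldType) (T : F -> K) :
    'M[K]_(#|F|, #|F|) :=
  \matrix_(r < #|F|, j < #|F|) T (enum_val (j : 'I_#|{: F}|)) ^+ r.

Definition nu_vec (K : fieldType) (nu : K -> \bar rat) (n : nat)
    (x : 'cV[K]_n) : \bar rat :=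
  \big[Order.min/+oo%E]_(i < n) nu (x i ord0).

(* Main.v *)
Require Import Defs.
From HB Require Import structures.
From mathcomp Require Import all_boot all_order all_algebra all_field.
From mathcomp Require Import constructive_ereal mxtens.
From mathcomp Require Import lra.

Set Implicit Arguments.
Unset Strict Implicit.

Import Order.TTheory GRing.Theory Num.Theory.
Local Open Scope ereal_scope.
Local Open Scope ring_scope.

Section Val.
Variables (K : fieldType) (nu : K -> \bar rat).
Hypothesis Hv : is_valuation nu.

Lemma nu0 : nu 0 = +oo%E.
Proof. by case: Hv => H _ _ _; apply/eqP; rewrite H. Qed.

Lemma nu_fin x : x != 0 -> exists r : rat, nu x = r%:E.
Proof.
case: Hv => H1 H2 _ _ nx; case E: (nu x) => [r| |]; first by exists r.
- by move: (H1 x); rewrite E eqxx (negbTE nx).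
- by move: (H2 x); rewrite E.
Qed.

Lemma nuM x y : nu (x * y) = (nu x + nu y)%E.
Proof. by case: Hv. Qed.

Lemma nu1 : nu 1 = 0%E.
Proof.
have [r Er] := nu_fin (oner_neq0 K).
have := nuM 1 1; rewrite mulr1 Er -EFinD => /eqP; rewrite eqe => /eqP h.
have -> : r = 0 by lra.
by [].
Qed.

Lemma nuN1 : nu (-1) = 0%E.
Proof.
have nz : (- (1:K)) != 0 by rewrite oppr_eq0 oner_neq0.
have [r Er] := nu_fin nz.
have := nuM (-1) (-1); rewrite mulrNN mulr1 nu1 Er -EFinD => /eqP; rewrite eqe => /eqP h.
have -> : r = 0 by lra.
by [].
Qed.

Lemma nuN x : nu (- x) = nu x.
Proof. by rewrite -mulN1r nuM nuN1 add0e. Qed.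

Lemma nuD x y : (Order.min (nu x) (nu y) <= nu (x + y))%E.
Proof. by case: Hv. Qed.

Lemma nu_sum (I : Type) (r : seq I) (P : pred I) (F : I -> K) (c : \bar rat) :
  (forall i, P i -> c <= nu (F i))%E -> (c <= nu (\sum_(i <- r | P i) F i))%E.
Proof.
move=> H; elim/big_ind: _ => //; first by rewrite nu0 leey.
move=> x y hx hy; apply: le_trans (nuD x y); by rewrite le_min hx hy.
Qed.

Lemma nu_prod (I : Type) (r : seq I) (P : pred I) (F : I -> K) :
  (forall i, P i -> 0 <= nu (F i))%E -> (0 <= nu (\prod_(i <- r | P i) F i))%E.
Proof.
move=> H; elim/big_ind: _ => //; first by rewrite nu1.
by move=> x y hx hy; rewrite nuM adde_ge0.
Qed.

Lemma nu_prod0 (I : Type) (r : seq I) (P : pred I) (F : I -> K) :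
  (forall i, P i -> nu (F i) = 0)%E -> (nu (\prod_(i <- r | P i) F i) = 0)%E.
Proof.
move=> H; elim/big_ind: _ => //; first by rewrite nu1.
by move=> x y hx hy; rewrite nuM hx hy adde0.
Qed.

Lemma nu_sign n : nu ((-1) ^+ n) = 0%E.
Proof. elim: n => [|n IH]; first by rewrite expr0 nu1.
by rewrite exprS nuM nuN1 IH adde0. Qed.

Definition integral {m n} (A : 'M[K]_(m, n)) := forall i j, (0 <= nu (A i j))%E.

Lemma nu_det n (A : 'M[K]_n) : integral A -> (0 <= nu (\det A))%E.
Proof.
move=> H; rewrite /determinant; apply: nu_sum => s _.
by rewrite nuM nu_sign add0e; apply: nu_prod.
Qed.

Lemma nu_inv d : d != 0 -> nu d = 0%E -> nu d^-1 = 0%E.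
Proof.
move=> d0 nd; have := nuM d d^-1; rewrite mulfV // nu1 nd add0e. by move <-.
Qed.

Lemma vec_lb n (x : 'cV[K]_n) c :
  (c <= nu_vec nu x)%E <-> (forall i, c <= nu (x i ord0))%E.
Proof.
split.
- move=> H i; apply: le_trans H _; exact: bigmin_le.
- move=> H; apply: le_bigmin => //; exact: leey.
Qed.

Lemma mul_ge m n (A : 'M[K]_(m, n)) x : integral A ->
  (nu_vec nu x <= nu_vec nu (A *m x))%E.
Proof.
move=> HA; apply/vec_lb => i; rewrite mxE; apply: nu_sum => j _.
rewrite nuM; apply: le_trans (leeDr _ (HA i j)).
by move: (le_refl (nu_vec nu x)) => /vec_lb; apply.
Qed.

Lemma key n (A B : 'M[K]_n) x : integral A -> integral B -> B *m A = 1%:M ->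
  nu_vec nu (A *m x) = nu_vec nu x.
Proof.
move=> HA HB BA; apply: le_anti; rewrite mul_ge // andbT.
have e : x = B *m (A *m x) by rewrite mulmxA BA mul1mx.
by have := @mul_ge _ _ B (A *m x) HB; rewrite -e.
Qed.

Lemma integral1 n : integral (1%:M : 'M[K]_n).
Proof. move=> i j; rewrite mxE; case: (i == j); rewrite ?nu1 ?nu0 ?leey //. Qed.

Lemma integral_tens m n p q (A : 'M[K]_(m, n)) (B : 'M[K]_(p, q)) :
  integral A -> integral B -> integral (A *t B).
Proof. by move=> HA HB i j; rewrite mxE nuM adde_ge0. Qed.

Lemma integral_ntens n (A : 'M[K]_n) k : integral A -> integral (A ^t k).
Proof.
move=> HA; case: k => [|k]; first exact: integral1.
rewrite /ntensmx; elim: k => [|k IH] //=; exact: integral_tens.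
Qed.

End Val.

Lemma tens11 (R : comPzRingType) m n :
  (1%:M : 'M[R]_m) *t (1%:M : 'M[R]_n) = 1%:M.
Proof.
apply/matrixP => i j.
case: (mxtens_indexP i) => [a b]; case: (mxtens_indexP j) => [c d].
rewrite tensmxE !mxE (can_eq (@mxtens_indexK _ _)) xpair_eqE.
by case: (a == c); case: (b == d); rewrite ?mulr1 ?mulr0 ?mul0r.
Qed.

Lemma ntens_mul (R : comPzRingType) n (A B : 'M[R]_n) k :
  A ^t k *m B ^t k = (A *m B) ^t k.
Proof.
case: k => [|k]; first by rewrite !ntensmx0 mulmx1.
rewrite /ntensmx; elim: k => [|k IH] //=.
by rewrite tensmx_mul IH.
Qed.

Lemma ntens1 (R : comPzRingType) n k : (1%:M : 'M[R]_n) ^t k = 1%:M.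
Proof.
case: k => [|k]; first by rewrite ntensmx0.
rewrite /ntensmx; elim: k => [|k IH] //=.
by rewrite IH tens11.
Qed.

Theorem lemma2p3 (p e k : nat) (K : fieldType) (nu : K -> \bar rat)
    (F : finFieldType) (red : K -> F) (T : F -> K) :
  prime p -> (0 < e)%N -> #|F| = (p ^ e)%N ->
  is_valuation nu -> extends_nu_p p nu ->
  is_reduction nu red -> is_teichmuller nu red T ->
  forall x : 'cV[K]_(#|F| ^ k),
    nu_vec nu (ntensmx (M0 T) k *m x) = nu_vec nu x.
Proof.
move=> _ _ _ Hv _ Hr Ht x.
case: Hr => rD rM r1 r0 _.
have intT a : (0 <= nu (T a))%E by case: (Ht a).
have redT a : red (T a) = a by case: (Ht a).
have intM : integral nu (M0 T).
  by move=> i j; rewrite mxE; elim: (nat_of_ord i) => [|r IH];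
    rewrite ?expr0 ?(nu1 Hv) // exprS (nuM Hv) adde_ge0.
have red0 : red 0 = 0.
  by apply/eqP; rewrite r0 (nu0 Hv) // ?lee_fin // ltey.
have diff a b : a != b -> nu (T a - T b)%R = 0%E.
  move=> ab.
  have iN : (0 <= nu (- T b)%R)%E by rewrite (nuN Hv).
  have rN : red (- T b)%R = (- b)%R.
    have := rD _ _ (intT b) iN; rewrite subrr red0 redT.
    by move=> h; apply/eqP; rewrite -addr_eq0 addrC -h.
  have i1 : (0 <= nu (T a - T b)%R)%E.
    apply: le_trans (nuD Hv _ _); by rewrite le_min intT iN.
  have : red (T a - T b)%R != 0 by rewrite rD // redT rN subr_eq0.
  rewrite r0 // => h; apply: le_anti; rewrite i1 andbT.
  by rewrite leNgt.
have detM : nu (\det (M0 T)) = 0%E.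
  have -> : M0 T = Vandermonde #|F| (\row_j T (enum_val (j : 'I_#|{: F}|))).
    by apply/matrixP => i j; rewrite !mxE.
  rewrite det_Vandermonde; apply: (nu_prod0 Hv) => i _; apply: (nu_prod0 Hv) => j ij.
  rewrite !mxE; apply: diff; apply/eqP => /enum_val_inj h.
  by move: ij; rewrite h ltnn.
have d0 : \det (M0 T) != 0.
  by apply/negP => /eqP h; move: detM; rewrite h (nu0 Hv).
have uM : M0 T \in unitmx by rewrite unitmxE unitfE.
have intI : integral nu (invmx (M0 T)).
  move=> i j; rewrite /invmx uM !mxE (nuM Hv) (nu_inv Hv) // add0e /cofactor (nuM Hv) (nu_sign Hv) add0e.
  apply: (nu_det Hv) => a b; rewrite !mxE; by have := intM (lift j a) (lift i b); rewrite mxE.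
apply: (key Hv x (@integral_ntens _ _ Hv _ _ k intM) (@integral_ntens _ _ Hv _ _ k intI)).
by rewrite ntens_mul mulVmx // ntens1.
Qed.
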